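(* Let $h\ge 1$, let $0<t_1<t_2<\dots<t_h$ be fixed points, let $W$ be a positive nondecreasing function with $W(t_1)\le \dots\le W(t_h)$ (all $W(t_j)>0$), and let $\xi_1,\dots,\xi_h,\zeta_1,\dots,\zeta_h$ be nonnegative integers with $\xi_j+\zeta_j\ge 1$ for every $j$. Consider the problem $$\text{maximize } \mathcal L(\mathbf p)=\prod_{j=1}^h p_j^{\xi_j}\Big(\sum_{k\ge j}\frac{p_k}{W(t_k)}\Big)^{\zeta_j}\quad\text{subject to } \sum_{j=1}^h p_j=1,\ p_j\ge 0\ (j=1,\dots,h).$$ Then this problem has a unique maximizer $\mathbf p=(p_1,\dots,p_h)$.
   Context: Here $p_j$ is the mass a discrete distribution assigns to $t_j$; $\xi_j$ and $\zeta_j$ are the numbers of uncensored and censored observations located at $t_j$, respectively. The convention $0^0=1$ is used. *)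

(* Defs.v *)
(* classical reals. Indices are 0-based: j = 0, ..., h-1
   corresponds to the paper's j = 1, ..., h. *)
From Stdlib Require Import Reals Lra Lia.
Open Scope R_scope.

Fixpoint rsum (f : nat -> R) (n : nat) : R :=
  match n with
  | O => 0
  | S m => rsum f m + f m
  end.

Fixpoint rprod (f : nat -> R) (n : nat) : R :=
  match n with
  | O => 1
  | S m => rprod f m * f m
  end.

Definition feasible (h : nat) (p : nat -> R) : Prop :=
  (forall j, (j < h)%nat -> 0 <= p j) /\ rsum p h = 1.

Definition tailsum (h : nat) (t : nat -> R) (W : R -> R) (p : nat -> R) (j : nat) : R :=
  rsum (fun k => if (j <=? k)%nat then p k / W (t k) else 0) h.

(* likelihood  prod_j p_j^xi_j * (tailsum_j)^zeta_j ; pow has 0^0 = 1 *)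
Definition lik (h : nat) (t : nat -> R) (W : R -> R) (xi zeta : nat -> nat)
  (p : nat -> R) : R :=
  rprod (fun j => (p j) ^ (xi j) * (tailsum h t W p j) ^ (zeta j)) h.

(* Main.v *)
Require Import Defs.
From Stdlib Require Import Reals Lra Lia ClassicalEpsilon Classical.
Open Scope R_scope.

Lemma cv_const c : Un_cv (fun _ => c) c.
Proof. intros e He; exists 0%nat; intros; unfold R_dist.
  replace (c - c) with 0 by ring; rewrite Rabs_R0; lra. Qed.

Lemma rsum_cv (F : nat -> nat -> R) G m :
  (forall k, (k < m)%nat -> Un_cv (fun n => F n k) (G k)) ->
  Un_cv (fun n => rsum (F n) m) (rsum G m).
Proof.
  induction m; intros H; simpl.
  - apply cv_const.
  - apply (CV_plus (fun n => rsum (F n) m) (fun n => F n m)).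
    + apply IHm; intros; apply H; lia.
    + apply H; lia.
Qed.

Lemma rprod_cv (F : nat -> nat -> R) G m :
  (forall k, (k < m)%nat -> Un_cv (fun n => F n k) (G k)) ->
  Un_cv (fun n => rprod (F n) m) (rprod G m).
Proof.
  induction m; intros H; simpl.
  - apply cv_const.
  - apply (CV_mult (fun n => rprod (F n) m) (fun n => F n m)).
    + apply IHm; intros; apply H; lia.
    + apply H; lia.
Qed.

Lemma pow_cv A l e : Un_cv A l -> Un_cv (fun n => A n ^ e) (l ^ e).
Proof.
  intros H; induction e; simpl.
  - apply cv_const.
  - apply (CV_mult A (fun n => A n ^ e)); auto.
Qed.

Lemma lik_cv h t W xi zeta (Q : nat -> nat -> R) p :
  (forall j, (j < h)%nat -> Un_cv (fun n => Q n j) (p j)) ->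
  Un_cv (fun n => lik h t W xi zeta (Q n)) (lik h t W xi zeta p).
Proof.
  intros H; unfold lik.
  apply (rprod_cv (fun n j => Q n j ^ xi j * tailsum h t W (Q n) j ^ zeta j)).
  intros k Hk.
  apply (CV_mult (fun n => Q n k ^ xi k) (fun n => tailsum h t W (Q n) k ^ zeta k)).
  - apply pow_cv; auto.
  - apply pow_cv. unfold tailsum.
    apply (rsum_cv (fun n k0 => if (k <=? k0)%nat then Q n k0 / W (t k0) else 0)).
    intros k0 Hk0. destruct (k <=? k0)%nat.
    + apply (CV_mult (fun n => Q n k0) (fun _ => / W (t k0))); auto. apply cv_const.
    + apply cv_const.
Qed.

Lemma rsum_nonneg f n : (forall k, (k < n)%nat -> 0 <= f k) -> 0 <= rsum f n.
Proof. induction n; simpl; intros H; [lra|].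
  assert (0 <= rsum f n) by (apply IHn; intros; apply H; lia).
  assert (0 <= f n) by (apply H; lia). lra. Qed.

Lemma rsum_ge_term f n j : (forall k, (k < n)%nat -> 0 <= f k) -> (j < n)%nat -> f j <= rsum f n.
Proof. induction n; simpl; intros H Hj; [lia|].
  destruct (Nat.eq_dec j n) as [->|Hne].
  - assert (0 <= rsum f n) by (apply rsum_nonneg; intros; apply H; lia). lra.
  - assert (f j <= rsum f n) by (apply IHn; [intros; apply H; lia| lia]).
    assert (0 <= f n) by (apply H; lia). lra. Qed.

Lemma rprod_nonneg f n : (forall k, (k < n)%nat -> 0 <= f k) -> 0 <= rprod f n.
Proof. induction n; simpl; intros H; [lra|].
  apply Rmult_le_pos; [apply IHn; intros; apply H; lia | apply H; lia]. Qed.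

Lemma rprod_pos f n : (forall k, (k < n)%nat -> 0 < f k) -> 0 < rprod f n.
Proof. induction n; simpl; intros H; [lra|].
  apply Rmult_lt_0_compat; [apply IHn; intros; apply H; lia | apply H; lia]. Qed.

Lemma rprod_le f g n : (forall k, (k < n)%nat -> 0 <= f k <= g k) -> rprod f n <= rprod g n.
Proof. induction n; simpl; intros H; [lra|].
  assert (0 <= rprod f n) by (apply rprod_nonneg; intros; apply H; lia).
  assert (rprod f n <= rprod g n) by (apply IHn; intros; apply H; lia).
  assert (0 <= f n <= g n) by (apply H; lia). nra. Qed.

Lemma rprod_pos_factor f n : (forall k, (k < n)%nat -> 0 <= f k) -> 0 < rprod f n ->
  forall j, (j < n)%nat -> 0 < f j.
Proof. induction n; simpl; intros H Hp j Hj; [lia|].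
  assert (0 <= rprod f n) by (apply rprod_nonneg; intros; apply H; lia).
  assert (0 <= f n) by (apply H; lia).
  assert (Ha : 0 < rprod f n).
  { destruct (Rle_lt_or_eq_dec 0 _ H0) as [|E]; auto. rewrite <- E in Hp. lra. }
  assert (Hb : 0 < f n).
  { destruct (Rle_lt_or_eq_dec 0 _ H1) as [|E]; auto. rewrite <- E in Hp. lra. }
  destruct (Nat.eq_dec j n) as [->|]; auto. apply IHn; auto; try lia. Qed.

Lemma rprod_eq_factor a b n : (forall k, (k < n)%nat -> 0 < b k <= a k) ->
  rprod a n <= rprod b n -> forall j, (j < n)%nat -> a j = b j.
Proof. induction n; simpl; intros H Hle j Hj; [lia|].
  assert (0 < rprod b n) by (apply rprod_pos; intros; apply H; lia).
  assert (rprod b n <= rprod a n) by (apply rprod_le; intros; split; [apply Rlt_le|]; apply H; lia).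
  assert (0 < b n <= a n) by (apply H; lia).
  assert (rprod a n = rprod b n) by nra.
  assert (a n = b n) by nra.
  destruct (Nat.eq_dec j n) as [->|]; auto. apply IHn; [intros; apply H; lia| lra | lia]. Qed.

Fixpoint build (g : nat -> nat -> nat) (n : nat) : nat :=
  match n with O => g O O | S m => g (S (build g m)) (S m) end.

Lemma inv_small eps : 0 < eps -> exists N, forall n, (N <= n)%nat -> / (INR n + 1) < eps.
Proof.
  intros He. destruct (archimed_cor1 eps He) as [N [HN HN0]].
  exists N; intros n Hn.
  assert (0 < INR N) by (apply lt_0_INR; lia).
  assert (INR N <= INR n) by (apply le_INR; lia).
  apply Rle_lt_trans with (/ INR N); auto.
  apply Rinv_le_contravar; lra.
Qed.

Lemma one_d (u : nat -> R) : (forall n, 0 <= u n <= 1) ->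
  exists psi : nat -> nat, (forall n, (psi n < psi (S n))%nat) /\
    exists l, Un_cv (fun n => u (psi n)) l.
Proof.
  intros Hu. destruct (Bolzano_Weierstrass u _ (compact_P3 0 1) Hu) as [l Hl].
  assert (Hex : forall N k, exists p, (N <= p)%nat /\ Rabs (u p - l) < / (INR k + 1)).
  { intros N k.
    assert (Hp : 0 < / (INR k + 1)).
    { apply Rinv_0_lt_compat. pose proof (pos_INR k). lra. }
    destruct (Hl (disc l (mkposreal _ Hp)) N) as [p [H1 H2]].
    - exists (mkposreal _ Hp). intros x Hx; exact Hx.
    - exists p; split; auto. }
  pose (g := fun N k => proj1_sig (constructive_indefinite_description _ (Hex N k))).
  assert (Hg : forall N k, (N <= g N k)%nat /\ Rabs (u (g N k) - l) < / (INR k + 1)).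
  { intros N k. unfold g. destruct (constructive_indefinite_description _ (Hex N k)); auto. }
  exists (build g). split.
  - intros n. simpl. destruct (Hg (S (build g n)) (S n)). lia.
  - exists l. intros eps He. destruct (inv_small eps He) as [N HN].
    exists N. intros n Hn. unfold R_dist.
    assert (Rabs (u (build g n) - l) < / (INR n + 1)).
    { destruct n; simpl; apply Hg. }
    specialize (HN n Hn). lra.
Qed.

Lemma strict_mono (phi : nat -> nat) : (forall n, (phi n < phi (S n))%nat) ->
  forall a b, (a < b)%nat -> (phi a < phi b)%nat.
Proof. intros H a b Hab. induction b; [lia|].
  destruct (Nat.eq_dec a b) as [->|]; [apply H|]. specialize (H b). assert (phi a < phi b)%nat by (apply IHb; lia). lia. Qed.

Lemma strict_ge (phi : nat -> nat) : (forall n, (phi n < phi (S n))%nat) -> forall n, (n <= phi n)%nat.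
Proof. intros H n; induction n; [lia|]. specialize (H n); lia. Qed.

Lemma cv_sub (v : nat -> R) l (psi : nat -> nat) : (forall n, (n <= psi n)%nat) ->
  Un_cv v l -> Un_cv (fun n => v (psi n)) l.
Proof. intros Hp H eps He. destruct (H eps He) as [N HN]. exists N; intros n Hn.
  apply HN. specialize (Hp n); lia. Qed.

Lemma extract (Q : nat -> nat -> R) K : (forall n j, (j < K)%nat -> 0 <= Q n j <= 1) ->
  forall k, (k <= K)%nat -> exists phi : nat -> nat, (forall n, (phi n < phi (S n))%nat) /\
   exists p : nat -> R, forall j, (j < k)%nat -> Un_cv (fun n => Q (phi n) j) (p j).
Proof.
  intros HQ k; induction k; intros Hk.
  - exists (fun n => n). split; [intros; lia|]. exists (fun _ => 0). intros; lia.
  - destruct IHk as [phi [Hphi [p Hp]]]; [lia|].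
    destruct (one_d (fun n => Q (phi n) k)) as [psi [Hpsi [l Hl]]].
    { intros; apply HQ; lia. }
    exists (fun n => phi (psi n)). split.
    + intros n. apply strict_mono; auto.
    + exists (fun j => if (j =? k)%nat then l else p j). intros j Hj.
      destruct (Nat.eqb_spec j k) as [->|Hne]; auto.
      apply (cv_sub (fun n => Q (phi n) j)); [apply strict_ge; auto|]. apply Hp; lia.
Qed.

Lemma rsum_mid f g n : rsum (fun k => (f k + g k) / 2) n = (rsum f n + rsum g n) / 2.
Proof. induction n; simpl; [field|]. rewrite IHn. field. Qed.

Lemma tailsum_mid h t W p q j :
  tailsum h t W (fun k => (p k + q k) / 2) j = (tailsum h t W p j + tailsum h t W q j) / 2.
Proof. unfold tailsum. rewrite <- rsum_mid.
  induction h; simpl; auto. rewrite IHh. f_equal. destruct (j <=? h)%nat; unfold Rdiv; ring. Qed.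

Lemma tailsum_nonneg h t W p j : (forall k, (k < h)%nat -> 0 < W (t k)) ->
  (forall k, (k < h)%nat -> 0 <= p k) -> 0 <= tailsum h t W p j.
Proof. intros HW Hp. unfold tailsum. apply rsum_nonneg. intros k Hk.
  destruct (j <=? k)%nat; [|lra]. apply Rmult_le_pos; auto.
  apply Rlt_le, Rinv_0_lt_compat; auto. Qed.

Lemma sq_pow a n : (a ^ n) ^ 2 = (a ^ 2) ^ n.
Proof. rewrite <- !pow_mult, Nat.mul_comm; reflexivity. Qed.

Lemma pow_strict x y n : 0 <= x < y -> (0 < n)%nat -> x ^ n < y ^ n.
Proof. intros H Hn. induction n; [lia|]. simpl. destruct n; [simpl; lra|].
  assert (x ^ S n < y ^ S n) by (apply IHn; lia).
  assert (0 <= x ^ S n) by (apply pow_le; lra). nra. Qed.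

Lemma rsum_single f n j : (forall k, (k < n)%nat -> k <> j -> f k = 0) -> (j < n)%nat -> rsum f n = f j.
Proof.
  assert (Z : forall m, (forall k, (k < m)%nat -> f k = 0) -> rsum f m = 0).
  { induction m; simpl; intros H; auto. rewrite IHm, H; try lra; auto. }
  induction n; simpl; intros H Hj; [lia|].
  destruct (Nat.eq_dec j n) as [->|].
  - rewrite Z; [ring|]. intros; apply H; lia.
  - rewrite IHn, (H n); try lia; try ring. intros; apply H; lia. Qed.

Lemma rsum_sub f g n : rsum f n - rsum g n = rsum (fun k => f k - g k) n.
Proof. induction n; simpl; [ring|]. rewrite <- IHn; ring. Qed.

Lemma rprod_sq f n : rprod (fun j => f j ^ 2) n = rprod f n ^ 2.
Proof. induction n; cbn [rprod]; [ring|]. rewrite IHn. ring. Qed.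
Lemma rprod_mul f g n : rprod (fun j => f j * g j) n = rprod f n * rprod g n.
Proof. induction n; cbn [rprod]; [ring|]. rewrite IHn. ring. Qed.

Lemma pow2R x : x ^ 2 = x * x. Proof. ring. Qed.

Section U.
Variables (h : nat) (t : nat -> R) (W : R -> R) (xi zeta : nat -> nat).
Hypothesis hWpos : forall j, (j < h)%nat -> 0 < W (t j).
Hypothesis hobs : forall j, (j < h)%nat -> (1 <= xi j + zeta j)%nat.

Definition fct (p : nat -> R) j := p j ^ xi j * tailsum h t W p j ^ zeta j.

Lemma uniq_max p q M : feasible h p -> feasible h q ->
  (forall r, feasible h r -> lik h t W xi zeta r <= M) ->
  lik h t W xi zeta p = M -> lik h t W xi zeta q = M -> 0 < M ->
  forall j, (j < h)%nat -> p j = q j.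
Proof.
  intros [Hp0 Hp1] [Hq0 Hq1] Hmax HLp HLq HM.
  set (m := fun k => (p k + q k) / 2).
  assert (Hm : feasible h m).
  { split. - intros; unfold m; specialize (Hp0 j H); specialize (Hq0 j H); lra.
    - unfold m; rewrite rsum_mid, Hp1, Hq1; field. }
  assert (HLm := Hmax m Hm).
  assert (Hfp : forall j, (j < h)%nat -> 0 < fct p j).
  { apply rprod_pos_factor.
    - intros k Hk; unfold fct; apply Rmult_le_pos; apply pow_le; auto.
      apply tailsum_nonneg; auto.
    - change (0 < lik h t W xi zeta p). lra. }
  assert (Hfq : forall j, (j < h)%nat -> 0 < fct q j).
  { apply rprod_pos_factor.
    - intros k Hk; unfold fct; apply Rmult_le_pos; apply pow_le; auto.
      apply tailsum_nonneg; auto.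
    - change (0 < lik h t W xi zeta q). lra. }
  assert (Hfac : forall j, (j < h)%nat -> 0 < fct p j * fct q j <= fct m j ^ 2).
  { intros j Hj. split; [apply Rmult_lt_0_compat; auto|].
    unfold fct, m; cbv beta; rewrite tailsum_mid.
    replace (p j ^ xi j * tailsum h t W p j ^ zeta j * (q j ^ xi j * tailsum h t W q j ^ zeta j))
      with ((p j * q j) ^ xi j * (tailsum h t W p j * tailsum h t W q j) ^ zeta j)
      by (rewrite !Rpow_mult_distr; ring).
    rewrite (Rpow_mult_distr _ _ 2), !sq_pow.
    assert (0 <= tailsum h t W p j) by (apply tailsum_nonneg; auto).
    assert (0 <= tailsum h t W q j) by (apply tailsum_nonneg; auto).
    specialize (Hp0 j Hj); specialize (Hq0 j Hj).
    assert (0 <= (p j - q j) * (p j - q j)) by apply Rle_0_sqr.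
    assert (0 <= (tailsum h t W p j - tailsum h t W q j) * (tailsum h t W p j - tailsum h t W q j)) by apply Rle_0_sqr.
    apply Rmult_le_compat; try (apply pow_le; nra); apply pow_incr; split; try nra; rewrite pow2R; nra. }
  assert (Heq : forall j, (j < h)%nat -> fct m j ^ 2 = fct p j * fct q j).
  { apply (rprod_eq_factor (fun j => fct m j ^ 2) (fun j => fct p j * fct q j) h Hfac).
    assert (E1 : rprod (fun j => fct m j ^ 2) h = lik h t W xi zeta m ^ 2).
    { unfold lik, fct. rewrite rprod_sq. reflexivity. }
    assert (E2 : rprod (fun j => fct p j * fct q j) h = lik h t W xi zeta p * lik h t W xi zeta q).
    { unfold lik, fct. rewrite rprod_mul. reflexivity. }
    rewrite E1, E2, HLp, HLq.
    assert (0 <= lik h t W xi zeta m).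
    { apply rprod_nonneg. intros k Hk. apply Rmult_le_pos; apply pow_le.
      - destruct Hm as [Hm0 _]; auto.
      - apply tailsum_nonneg; auto; destruct Hm; auto. }
    nra. }
  assert (Hlin : forall j, (j < h)%nat ->
     ((0 < xi j)%nat -> p j = q j) /\ ((0 < zeta j)%nat -> tailsum h t W p j = tailsum h t W q j)).
  { intros j Hj. specialize (Heq j Hj). specialize (Hfp j Hj). specialize (Hfq j Hj).
    unfold fct, m in *; cbv beta in *; rewrite tailsum_mid in Heq.
    assert (E : p j ^ xi j * tailsum h t W p j ^ zeta j * (q j ^ xi j * tailsum h t W q j ^ zeta j)
       = (p j * q j) ^ xi j * (tailsum h t W p j * tailsum h t W q j) ^ zeta j)
      by (rewrite !Rpow_mult_distr; ring).
    rewrite E in Heq. rewrite (Rpow_mult_distr _ _ 2), !sq_pow in Heq.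
    set (a := p j) in *; set (b := q j) in *;
    set (c := tailsum h t W p j) in *; set (d := tailsum h t W q j) in *.
    assert (0 <= c) by (apply tailsum_nonneg; auto).
    assert (0 <= d) by (apply tailsum_nonneg; auto).
    assert (0 <= a) by (apply Hp0; auto). assert (0 <= b) by (apply Hq0; auto).
    assert (0 <= (a - b) * (a - b)) by apply Rle_0_sqr.
    assert (0 <= (c - d) * (c - d)) by apply Rle_0_sqr.
    assert (B1 : 0 <= (a * b) ^ xi j) by (apply pow_le; nra).
    assert (B2 : 0 <= (c * d) ^ zeta j) by (apply pow_le; nra).
    assert (Bpos : 0 < (a * b) ^ xi j * (c * d) ^ zeta j).
    { replace ((a * b) ^ xi j * (c * d) ^ zeta j) with (a ^ xi j * c ^ zeta j * (b ^ xi j * d ^ zeta j))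
       by (rewrite !Rpow_mult_distr; ring). nra. }
    assert (A1 : (a * b) ^ xi j <= (((a + b) / 2) ^ 2) ^ xi j) by (apply pow_incr; split; try nra; rewrite pow2R; nra).
    assert (A2 : (c * d) ^ zeta j <= (((c + d) / 2) ^ 2) ^ zeta j) by (apply pow_incr; split; try nra; rewrite pow2R; nra).
    assert (0 < (a * b) ^ xi j) by (destruct (Rle_lt_or_eq_dec _ _ B1) as [|E']; auto; rewrite <- E' in Bpos; lra).
    assert (0 < (c * d) ^ zeta j) by (destruct (Rle_lt_or_eq_dec _ _ B2) as [|E']; auto; rewrite <- E' in Bpos; lra).
    split; intros Hx.
    - destruct (Req_dec a b) as [|Hne]; auto. exfalso.
      assert ((a * b) ^ xi j < (((a + b) / 2) ^ 2) ^ xi j).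
      { apply pow_strict; auto. split; [nra|]. rewrite pow2R.
        assert (0 < (a - b) * (a - b)) by (apply Rsqr_pos_lt; lra). nra. }
      nra.
    - destruct (Req_dec c d) as [|Hne]; auto. exfalso.
      assert ((c * d) ^ zeta j < (((c + d) / 2) ^ 2) ^ zeta j).
      { apply pow_strict; auto. split; [nra|].
        rewrite pow2R. assert (0 < (c - d) * (c - d)) by (apply Rsqr_pos_lt; lra). nra. }
      nra. }
  assert (Hkey : forall k, (k < h)%nat -> (forall k', (k < k')%nat -> (k' < h)%nat -> p k' = q k') -> p k = q k).
  { intros k Hk Hgt. destruct (Hlin k Hk) as [Hx Hz].
    specialize (hobs k Hk).
    destruct (Nat.lt_ge_cases 0 (xi k)) as [Hx0|Hx0]; [apply Hx; auto|].
    assert (Ht : tailsum h t W p k = tailsum h t W q k) by (apply Hz; lia).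
    assert (E0 : tailsum h t W p k - tailsum h t W q k = p k / W (t k) - q k / W (t k)).
    { unfold tailsum. rewrite rsum_sub. rewrite (rsum_single _ h k); auto.
      - rewrite Nat.leb_refl. reflexivity.
      - intros i Hi Hne. destruct (Nat.leb_spec k i); [|ring].
        rewrite (Hgt i); [ring|lia|lia]. }
    rewrite Ht in E0. specialize (hWpos k Hk).
    assert (E1 : (p k - q k) / W (t k) = 0) by (unfold Rdiv in *; lra).
    assert (E2 : p k - q k = 0).
    { apply (Rmult_eq_reg_r (/ W (t k))); [ | apply Rgt_not_eq, Rinv_0_lt_compat; auto].
      unfold Rdiv in E1; lra. }
    lra. }
  assert (Hback : forall n k, (h - 1 - n <= k)%nat -> (k < h)%nat -> p k = q k).
  { induction n; intros k Hk1 Hk2.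
    - apply Hkey; auto. intros; lia.
    - destruct (Compare_dec.le_lt_dec (h - 1 - n) k) as [Hc|Hc]; [apply IHn; auto|].
      apply Hkey; auto. intros k' Hk' Hk'h. apply IHn; lia. }
  intros j Hj. apply (Hback h); lia.
Qed.
End U.

Lemma rsum_le f g n : (forall k, (k < n)%nat -> f k <= g k) -> rsum f n <= rsum g n.
Proof. induction n; simpl; intros H; [lra|].
  assert (rsum f n <= rsum g n) by (apply IHn; intros; apply H; lia).
  assert (f n <= g n) by (apply H; lia). lra. Qed.

Lemma rsum_const c n : rsum (fun _ => c) n = INR n * c.
Proof. induction n; simpl; [ring|]. rewrite IHn. destruct n; simpl; ring. Qed.

Theorem mainTheorem1 (h : nat) (t : nat -> R) (W : R -> R) (xi zeta : nat -> nat)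
  (hh : (1 <= h)%nat)
  (ht0 : 0 < t 0%nat)
  (htinc : forall j, (S j < h)%nat -> t j < t (S j))
  (hWmono : forall x y, 0 < x -> x <= y -> W x <= W y)
  (hWpos : forall j, (j < h)%nat -> 0 < W (t j))
  (hobs : forall j, (j < h)%nat -> (1 <= xi j + zeta j)%nat) :
  exists p : nat -> R,
    feasible h p /\
    (forall q, feasible h q -> lik h t W xi zeta q <= lik h t W xi zeta p) /\
    (forall q, feasible h q ->
       (forall r, feasible h r -> lik h t W xi zeta r <= lik h t W xi zeta q) ->
       forall j, (j < h)%nat -> q j = p j).
Proof.
  set (L := lik h t W xi zeta).
  assert (Hle1 : forall q, feasible h q -> forall j, (j < h)%nat -> 0 <= q j <= 1).
  { intros q [Hq0 Hq1] j Hj. split; auto. rewrite <- Hq1. apply rsum_ge_term; auto. }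
  set (T := rsum (fun k => / W (t k)) h).
  set (Bd := rprod (fun j => 1 ^ xi j * T ^ zeta j) h).
  assert (Hbd : forall q, feasible h q -> L q <= Bd).
  { intros q Hq. unfold L, lik, Bd. apply rprod_le. intros k Hk.
    assert (0 <= tailsum h t W q k) by (apply tailsum_nonneg; auto; apply Hq).
    assert (tailsum h t W q k <= T).
    { unfold tailsum, T. apply rsum_le. intros i Hi.
      assert (0 < / W (t i)) by (apply Rinv_0_lt_compat; auto).
      destruct (k <=? i)%nat; [|lra]. unfold Rdiv.
      destruct (Hle1 q Hq i Hi). nra. }
    destruct (Hle1 q Hq k Hk).
    split; [apply Rmult_le_pos; apply pow_le; lra|].
    apply Rmult_le_compat; try (apply pow_le; lra); apply pow_incr; lra. }
  set (u := fun _ : nat => / INR h).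
  assert (HhR : 0 < INR h) by (apply lt_0_INR; lia).
  assert (Hu : feasible h u).
  { split.
    - intros; unfold u; apply Rlt_le, Rinv_0_lt_compat; auto.
    - unfold u. rewrite rsum_const. field. lra. }
  assert (HLu : 0 < L u).
  { unfold L, lik. apply rprod_pos. intros k Hk.
    assert (0 < u k) by (unfold u; apply Rinv_0_lt_compat; auto).
    assert (0 < tailsum h t W u k).
    { unfold tailsum.
      apply Rlt_le_trans with (if (k <=? k)%nat then u k / W (t k) else 0).
      - rewrite Nat.leb_refl. unfold Rdiv. apply Rmult_lt_0_compat; auto.
        apply Rinv_0_lt_compat; auto.
      - apply (rsum_ge_term (fun k0 => if (k <=? k0)%nat then u k0 / W (t k0) else 0)); auto.
        intros i Hi. destruct (k <=? i)%nat; [|lra]. unfold Rdiv.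
        apply Rmult_le_pos; [unfold u; apply Rlt_le, Rinv_0_lt_compat; auto|].
        apply Rlt_le, Rinv_0_lt_compat; auto. }
    apply Rmult_lt_0_compat; apply pow_lt; auto. }
  set (E := fun x => exists q, feasible h q /\ x = L q).
  destruct (completeness E) as [M [HMub HMl]].
  { exists Bd. intros x [q [Hq ->]]. auto. }
  { exists (L u); exists u; auto. }
  assert (HMmax : forall r, feasible h r -> L r <= M).
  { intros r Hr; apply HMub; exists r; auto. }
  assert (HM : 0 < M) by (specialize (HMmax u Hu); lra).
  assert (Hnear : forall n : nat, exists q, feasible h q /\ M - / (INR n + 1) < L q).
  { intros n. apply NNPP; intros Hno.
    assert (Hpos : 0 < / (INR n + 1)) by (apply Rinv_0_lt_compat; pose proof (pos_INR n); lra).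
    assert (M <= M - / (INR n + 1)); [|lra].
    apply HMl. intros x [q [Hq ->]].
    destruct (Rle_or_lt (L q) (M - / (INR n + 1))) as [|Hlt]; auto.
    exfalso; apply Hno; exists q; auto. }
  set (Q := fun n => proj1_sig (constructive_indefinite_description _ (Hnear n))).
  assert (HQ : forall n, feasible h (Q n) /\ M - / (INR n + 1) < L (Q n)).
  { intros n; unfold Q; destruct (constructive_indefinite_description _ (Hnear n)); auto. }
  assert (HQb : forall n j, (j < h)%nat -> 0 <= Q n j <= 1).
  { intros n j Hj. apply Hle1; auto. apply HQ. }
  destruct (extract Q h HQb h (le_n h))
    as [phi [Hphi [p Hp]]].
  assert (Hpf : feasible h p).
  { split.
    - intros j Hj. apply (Rle_cv_lim (Un := fun _ => 0) (Vn := fun n => Q (phi n) j)); auto.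
      + intros n; apply (proj1 (proj1 (HQ (phi n)))); auto.
      + apply cv_const.
    - apply (UL_sequence (fun n => rsum (Q (phi n)) h)).
      + apply (rsum_cv (fun n => Q (phi n))). auto.
      + intros eps He; exists 0%nat; intros n _; unfold R_dist; cbv beta.
        rewrite (proj2 (proj1 (HQ (phi n)))). replace (1 - 1) with 0 by ring.
        rewrite Rabs_R0; lra. }
  assert (HLp : L p = M).
  { apply Rle_antisym; [apply HMmax; auto|].
    apply (Rle_cv_lim (Un := fun n => M - / (INR (phi n) + 1)) (Vn := fun n => L (Q (phi n)))).
    - intros n; apply Rlt_le, (HQ (phi n)).
    - intros eps He. destruct (inv_small eps He) as [N HN]. exists N. intros n Hn.
      unfold R_dist.
      assert (0 < / (INR (phi n) + 1)) by (apply Rinv_0_lt_compat; pose proof (pos_INR (phi n)); lra).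
      assert (/ (INR (phi n) + 1) < eps) by (apply HN; pose proof (strict_ge phi Hphi n); lia).
      rewrite Rabs_left; lra.
    - apply (lik_cv h t W xi zeta (fun n => Q (phi n))). auto. }
  exists p. split; [auto|split].
  - intros q Hq. fold L. rewrite HLp. auto.
  - intros q Hq Hqm j Hj. fold L in Hqm.
    apply (uniq_max h t W xi zeta hWpos hobs q p M); auto.
    apply Rle_antisym; [apply HMmax; auto|]. rewrite <- HLp. apply Hqm; auto.
Qed.
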